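(* Let $E$ be a graph and $k$ a field. If any two irreducible representations of $L_k(E)$ are algebraically equivalent, then $E$ has no cycles.
   Context: A graph $E=(E^0,E^1,r,s)$ has vertex set $E^0$, edge set $E^1$, range and source maps; no countability assumed. A vertex is regular if it emits a finite nonzero number of edges. A cycle is a path $e_1\cdots e_n$ ($n\ge1$, $r(e_i)=s(e_{i+1})$) with $s(e_1)=r(e_n)$. $L_k(E)$ is the universal $k$-algebra generated by pairwise orthogonal idempotents $p_v$ ($v\in E^0$) and elements $s_e,s_e^*$ ($e\in E^1$) with $p_{s(e)}s_e=s_e=s_ep_{r(e)}$, $p_{r(e)}s_e^*=s_e^*=s_e^*p_{s(e)}$, $s_e^*s_f=\delta_{e,f}p_{r(e)}$, and $p_v=\sum_{s(e)=v}s_es_e^*$ for each regular $v$. Representations $\rho_i:L_k(E)\to\mathrm{End}_k(V_i)$ are algebraically equivalent if $\rho_1(a)=T^{-1}\rho_2(a)T$ for all $a$ for some linear isomorphism $T:V_1\to V_2$; irreducible means the only invariant subspaces are $0$ and the whole space. *)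

(* Defs.v *)
From HB Require Import structures.
From mathcomp Require Import all_boot all_algebra.
From Stdlib Require Import List.
Set Implicit Arguments. Unset Strict Implicit. Unset Printing Implicit Defensive.
Import GRing.Theory.
Local Open Scope ring_scope.

(* A directed graph E = (E^0, E^1, r, s); no countability assumed. *)
Record graph := Graph {
  vert : Type;
  edge : Type;
  rg : edge -> vert;
  sc : edge -> vert }.

Section LPA.
Variables (E : graph) (k : fieldType).

Definition emits_list (v : vert E) (l : list (edge E)) : Prop :=
  NoDup l /\ (forall e, In e l <-> sc e = v).

Definition regular (v : vert E) : Prop :=
  exists l, l <> nil /\ emits_list v l.

Definition has_cycle : Prop :=
  exists (n : nat) (f : nat -> edge E), (0 < n)%N /\
    (forall i, (i.+1 < n)%N -> rg (f i) = sc (f i.+1)) /\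
    sc (f 0%N) = rg (f n.-1).

(* By the universal property of
   L_k(E), such an algebra homomorphism is the same as the assignment of
   k-linear operators rho(p_v), rho(s_e), rho(s_e^* ) satisfying the defining
   relations. *)
Record lpa_rep (V : lmodType k) := LpaRep {
  rP  : vert E -> {linear V -> V};
  rS  : edge E -> {linear V -> V};
  rSs : edge E -> {linear V -> V};
  rP_idem : forall v x, rP v (rP v x) = rP v x;
  rP_orth : forall v w x, v <> w -> rP v (rP w x) = 0;
  rS_src : forall e x, rP (sc e) (rS e x) = rS e x;
  rS_rg  : forall e x, rS e (rP (rg e) x) = rS e x;
  rSs_rg : forall e x, rP (rg e) (rSs e x) = rSs e x;
  rSs_src : forall e x, rSs e (rP (sc e) x) = rSs e x;
  rCK1 : forall e x, rSs e (rS e x) = rP (rg e) x;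
  rCK0 : forall e f x, e <> f -> rSs e (rS f x) = 0;
  rCK2 : forall v l x, l <> nil -> emits_list v l ->
           rP v x = \sum_(e <- l) rS e (rSs e x) }.

(* Formal expressions in the generators of L_k(E); every element of L_k(E)
   is the class of such an expression. *)
Inductive lterm :=
  | Tp of vert E
  | Ts of edge E
  | Tst of edge E
  | T0
  | Tadd of lterm & lterm
  | Tscale of k & lterm
  | Tmul of lterm & lterm.

Fixpoint rep_eval (V : lmodType k) (rho : lpa_rep V) (a : lterm) : V -> V :=
  match a with
  | Tp v => rP rho v
  | Ts e => rS rho e
  | Tst e => rSs rho e
  | T0 => fun _ => 0
  | Tadd a b => fun x => rep_eval rho a x + rep_eval rho b x
  | Tscale c a => fun x => c *: rep_eval rho a x
  | Tmul a b => fun x => rep_eval rho a (rep_eval rho b x)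
  end.

Definition subspace (V : lmodType k) (W : V -> Prop) : Prop :=
  W 0 /\ (forall x y, W x -> W y -> W (x + y)) /\
  (forall (c : k) x, W x -> W (c *: x)).

Definition invariant (V : lmodType k) (rho : lpa_rep V) (W : V -> Prop) : Prop :=
  forall a x, W x -> W (rep_eval rho a x).

Definition irreducible (V : lmodType k) (rho : lpa_rep V) : Prop :=
  (exists a x, rep_eval rho a x <> 0) /\
  forall W, subspace W -> invariant rho W ->
    (forall x, W x -> x = 0) \/ (forall x, W x).

Definition alg_equiv (V1 V2 : lmodType k) (rho1 : lpa_rep V1)
    (rho2 : lpa_rep V2) : Prop :=
  exists (T : {linear V1 -> V2}) (Ti : {linear V2 -> V1}),
    cancel T Ti /\ cancel Ti T /\
    forall a x, rep_eval rho1 a x = Ti (rep_eval rho2 a (T x)).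

End LPA.

(* Main.v *)
Require Import Defs.
From mathcomp Require Import all_boot all_algebra.
From HB Require Import structures.
From mathcomp Require Import all_boot all_algebra.
From mathcomp Require Import boolp zify.
From Stdlib Require Import List.
Require Import Defs.
Unset Strict Implicit. Unset Printing Implicit Defensive.
Import GRing.Theory.
Local Open Scope ring_scope.
Section Chen.
Variables (E : graph) (k : fieldType) (cinf : nat -> edge E).
Definition PT := nat -> edge E.
Definition isPath (q : PT) := forall i, rg (q i) = sc (q i.+1).
Definition tailc (q : PT) := exists a b, forall i, q (i + a)%N = cinf (i + b)%N.
Definition CC q := isPath q /\ tailc q.
Variable K : lmodType k.
Record fsv := FSV { fv : PT -> K;
  fv_fin : exists l : list PT, forall q, fv q <> 0 -> In q l;
  fv_C : forall q, fv q <> 0 -> CC q }.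
Arguments FSV [fv].
Arguments fv_C [f q].

Lemma fsv_ext (x y : fsv) : (forall q, fv x q = fv y q) -> x = y.
Proof.
case: x y => [f1 h1 c1] [f2 h2 c2] /= H.
have e : f1 = f2 by apply: funext.
subst f2; congr FSV; apply: Prop_irrelevance.
Qed.

HB.instance Definition _ := gen_eqMixin fsv.
HB.instance Definition _ := gen_choiceMixin fsv.

Lemma zero_fin : exists l : list PT, forall q, (fun _ : PT => (0:K)) q <> 0 -> In q l.
Proof. by exists nil => q /=. Qed.
Lemma zero_C : forall q, (fun _ : PT => (0:K)) q <> 0 -> CC q.
Proof. by move=> q. Qed.
Definition fzero := FSV zero_fin zero_C.

Lemma add_fin (x y : fsv) : exists l : list PT, forall q, (fun q => fv x q + fv y q) q <> 0 -> In q l.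
Proof.
case: (fv_fin x) => l1 H1; case: (fv_fin y) => l2 H2; exists (l1 ++ l2) => q /= H.
apply/in_or_app; case: (pselect (fv x q = 0)) => [h|h]; last by left; apply: H1.
by right; apply: H2 => h2; apply: H; rewrite h h2 addr0.
Qed.
Lemma add_C (x y : fsv) : forall q, (fun q => fv x q + fv y q) q <> 0 -> CC q.
Proof.
move=> q /= H; case: (pselect (fv x q = 0)) => [h|h]; last exact: fv_C h.
by apply: (@fv_C y) => h2; apply: H; rewrite h h2 addr0.
Qed.
Definition fadd x y := FSV (add_fin x y) (add_C x y).

Lemma scale_fin (c : k) (x : fsv) : exists l : list PT, forall q, (fun q => c *: fv x q) q <> 0 -> In q l.
Proof.
case: (fv_fin x) => l H; exists l => q /= h; apply: H => h2; apply: h; by rewrite h2 scaler0.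
Qed.
Lemma scale_C (c : k) (x : fsv) : forall q, (fun q => c *: fv x q) q <> 0 -> CC q.
Proof. move=> q /= h; apply: (@fv_C x) => h2; apply: h; by rewrite h2 scaler0. Qed.
Definition fscale c x := FSV (scale_fin c x) (scale_C c x).
Definition fopp x := fscale (-1) x.

Lemma faddA : associative fadd.
Proof. by move=> x y z; apply: fsv_ext => q /=; rewrite addrA. Qed.
Lemma faddC : commutative fadd.
Proof. by move=> x y; apply: fsv_ext => q /=; rewrite addrC. Qed.
Lemma fadd0 : left_id fzero fadd.
Proof. by move=> x; apply: fsv_ext => q /=; rewrite add0r. Qed.
Lemma faddN : left_inverse fzero fopp fadd.
Proof. by move=> x; apply: fsv_ext => q /=; rewrite scaleN1r addNr. Qed.
HB.instance Definition _ := GRing.isZmodule.Build fsv faddA faddC fadd0 faddN.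
Lemma fscaleA a b v : fscale a (fscale b v) = fscale (a * b) v.
Proof. by apply: fsv_ext => q /=; rewrite scalerA. Qed.
Lemma fscale1 : left_id 1 fscale.
Proof. by move=> x; apply: fsv_ext => q /=; rewrite scale1r. Qed.
Lemma fscaleDr : right_distributive fscale +%R.
Proof. by move=> a x y; apply: fsv_ext => q /=; rewrite scalerDr. Qed.
Lemma fscaleDl v : {morph fscale^~ v: a b / a + b}.
Proof. by move=> a b; apply: fsv_ext => q /=; rewrite scalerDl. Qed.
HB.instance Definition _ := GRing.Zmodule_isLmodule.Build k fsv fscaleA fscale1 fscaleDr fscaleDl.

Lemma fvD (x y : fsv) q : fv (x + y) q = fv x q + fv y q. Proof. by []. Qed.
Lemma fv0 q : fv (0 : fsv) q = 0. Proof. by []. Qed.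
Lemma fvZ c (x : fsv) q : fv (c *: x) q = c *: fv x q. Proof. by []. Qed.
Lemma fvN (x : fsv) q : fv (- x) q = - fv x q. Proof. by rewrite /= scaleN1r. Qed.
Lemma fvB (x y : fsv) q : fv (x - y) q = fv x q - fv y q. Proof. by rewrite fvD fvN. Qed.
Lemma fv_sum (I : Type) (l : list I) (F : I -> fsv) q :
  fv (\sum_(i <- l) F i) q = \sum_(i <- l) fv (F i) q.
Proof. elim: l => [|a l IH]; first by rewrite !big_nil. by rewrite !big_cons fvD IH. Qed.

Definition shift (q : PT) : PT := fun i => q i.+1.
Definition pcons (e : edge E) (q : PT) : PT :=
  fun i => match i with 0 => e | j.+1 => q j end.
Lemma cons_shift q : pcons (q 0%N) (shift q) = q.
Proof. by apply: funext; case. Qed.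

Lemma CC_shift q : CC q -> CC (shift q).
Proof.
case=> hp [a [b hab]]; split; first by move=> i; exact: hp.
exists a, b.+1 => i; rewrite /shift -addSn hab; by rewrite addSn addnS.
Qed.
Lemma CC_cons e q : rg e = sc (q 0%N) -> CC q -> CC (pcons e q).
Proof.
move=> he [hp [a [b hab]]]; split; first by case.
exists a.+1, b => i; by rewrite addnS /= hab.
Qed.

Lemma mk_fin (x : fsv) (g : PT -> K) (h : PT -> PT)
  (H : forall q, g q <> 0 -> exists q', fv x q' <> 0 /\ q = h q' /\ (CC q' -> CC q)) :
  exists l : list PT, forall q, g q <> 0 -> In q l.
Proof.
case: (fv_fin x) => l hl; exists (map h l) => q /H [q' [h1 [h2 _]]].
by rewrite h2; apply: in_map; apply: hl.
Qed.
Lemma mk_C (x : fsv) (g : PT -> K) (h : PT -> PT)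
  (H : forall q, g q <> 0 -> exists q', fv x q' <> 0 /\ q = h q' /\ (CC q' -> CC q)) :
  forall q, g q <> 0 -> CC q.
Proof. move=> q /H [q' [h1 [h2 h3]]]; apply: h3; exact: fv_C h1. Qed.
Definition mkf x g h H := @FSV g (@mk_fin x g h H) (@mk_C x g h H).

Variables (M Minv : {linear K -> K}).
Hypotheses (MK : cancel M Minv) (MiK : cancel Minv M).
Definition lam q (y : K) := if `[< q = cinf >] then M y else y.
Definition lami q (y : K) := if `[< q = cinf >] then Minv y else y.
Lemma lamK q : cancel (lam q) (lami q).
Proof. by move=> y; rewrite /lam /lami; case: asboolP. Qed.
Lemma lamiK q : cancel (lami q) (lam q).
Proof. by move=> y; rewrite /lam /lami; case: asboolP. Qed.
Lemma lamP q a y z : lam q (a *: y + z) = a *: lam q y + lam q z.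
Proof. by rewrite /lam; case: asboolP => // _; rewrite linearP. Qed.
Lemma lamiP q a y z : lami q (a *: y + z) = a *: lami q y + lami q z.
Proof. by rewrite /lami; case: asboolP => // _; rewrite linearP. Qed.
Lemma lam0 q : lam q 0 = 0.
Proof. by rewrite /lam; case: asboolP => // _; rewrite linear0. Qed.
Lemma lami0 q : lami q 0 = 0.
Proof. by rewrite /lami; case: asboolP => // _; rewrite linear0. Qed.

Definition pg w x : PT -> K := fun q => if `[< sc (q 0%N) = w >] then fv x q else 0.
Lemma pg_H w x q : pg w x q <> 0 -> exists q', fv x q' <> 0 /\ q = id q' /\ (CC q' -> CC q).
Proof. rewrite /pg; case: asboolP => // _ h; by exists q. Qed.
Definition pOp w x := @mkf x _ id (pg_H w x).

Definition sg e x : PT -> K := fun q =>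
  if `[< q 0%N = e /\ rg e = sc (q 1%N) >] then lam q (fv x (shift q)) else 0.
Lemma sg_H e x q : sg e x q <> 0 -> exists q', fv x q' <> 0 /\ q = pcons e q' /\ (CC q' -> CC q).
Proof.
rewrite /sg; case: asboolP => // [[h1 h2]] h; exists (shift q); split.
  by move=> h0; apply: h; rewrite h0 lam0.
split; first by rewrite -h1 cons_shift.
by move=> hc; rewrite -(cons_shift q); apply: CC_cons => //; rewrite h1.
Qed.
Definition sOp e x := @mkf x _ (pcons e) (sg_H e x).

Definition ssg e x : PT -> K := fun q =>
  if `[< rg e = sc (q 0%N) >] then lami (pcons e q) (fv x (pcons e q)) else 0.
Lemma ssg_H e x q : ssg e x q <> 0 -> exists q', fv x q' <> 0 /\ q = shift q' /\ (CC q' -> CC q).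
Proof.
rewrite /ssg; case: asboolP => // h1 h; exists (pcons e q); split.
  by move=> h0; apply: h; rewrite h0 lami0.
split => // hc; have h3 := CC_shift _ hc; exact h3.
Qed.
Definition ssOp e x := @mkf x _ shift (ssg_H e x).

Lemma pOp_lin w : linear (pOp w).
Proof. move=> a x y; apply: fsv_ext => q /=; rewrite /pg; case: asboolP => //= _. by rewrite scaler0 addr0. Qed.
Lemma sOp_lin e : linear (sOp e).
Proof. move=> a x y; apply: fsv_ext => q /=; rewrite /sg; case: asboolP => //= _; first by rewrite lamP. by rewrite scaler0 addr0. Qed.
Lemma ssOp_lin e : linear (ssOp e).
Proof. move=> a x y; apply: fsv_ext => q /=; rewrite /ssg; case: asboolP => //= _; first by rewrite lamiP. by rewrite scaler0 addr0. Qed.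
HB.instance Definition _ w := GRing.isLinear.Build k fsv fsv *:%R (pOp w) (pOp_lin w).
HB.instance Definition _ e := GRing.isLinear.Build k fsv fsv *:%R (sOp e) (sOp_lin e).
HB.instance Definition _ e := GRing.isLinear.Build k fsv fsv *:%R (ssOp e) (ssOp_lin e).


Lemma sum_single (l : list (edge E)) (a : K) (z : edge E) (R : Prop) : NoDup l ->
  \sum_(e <- l) (if `[< z = e /\ R >] then a else 0) = if `[< In z l /\ R >] then a else 0.
Proof.
elim: l => [|e l IH] hnd; first by rewrite big_nil; case: asboolP => // [[]].
rewrite big_cons IH; last by inversion hnd.
have he : ~ In e l by inversion hnd.
case: asboolP => [[h1 h2]|h1]; case: asboolP => [[h3 h4]|h3]; case: asboolP => [[h5 h6]|h5];
  rewrite ?addr0 ?add0r //; exfalso; simpl in *.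
all: try (subst z; by auto).
all: firstorder (subst; auto).
Qed.

Ltac fx := apply: fsv_ext => q; cbn [fv pOp sOp ssOp mkf]; unfold pg, sg, ssg; cbn [fv pOp sOp ssOp mkf].

Ltac cb := match goal with |- context [asbool ?P] => case: (asboolP P) end.
Lemma fv_pOp w x q : fv (pOp w x) q = pg w x q. Proof. by []. Qed.
Lemma fv_sOp e x q : fv (sOp e x) q = sg e x q. Proof. by []. Qed.
Lemma fv_ssOp e x q : fv (ssOp e x) q = ssg e x q. Proof. by []. Qed.
Definition fvE := (fv_pOp, fv_sOp, fv_ssOp, fv0).
Ltac simp := do 3 (rewrite ?fvE; unfold pg, sg, ssg).

Lemma c_idem v x : pOp v (pOp v x) = pOp v x.
Proof. apply: fsv_ext => q; simp; by cb. Qed.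
Lemma c_orth v w x : v <> w -> pOp v (pOp w x) = 0.
Proof. move=> vw; apply: fsv_ext => q; simp; cb => // h1; cb => // h2; by case: vw; rewrite -h1 -h2. Qed.
Lemma c_S_src e x : pOp (sc e) (sOp e x) = sOp e x.
Proof. apply: fsv_ext => q; simp; cb => // h1; cb => // [[h2 h3]]; by case: h1; rewrite h2. Qed.
Lemma c_S_rg e x : sOp e (pOp (rg e) x) = sOp e x.
Proof. apply: fsv_ext => q; simp; cb => // [[h2 h3]]; rewrite /shift asboolT //. Qed.
Lemma c_Ss_rg e x : pOp (rg e) (ssOp e x) = ssOp e x.
Proof. apply: fsv_ext => q; simp; cb => // h1; cb => // h2; by case: h1. Qed.
Lemma c_Ss_src e x : ssOp e (pOp (sc e) x) = ssOp e x.
Proof. apply: fsv_ext => q; simp; cb => // h1; rewrite asboolT //. Qed.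
Lemma c_CK1 e x : ssOp e (sOp e x) = pOp (rg e) x.
Proof.
apply: fsv_ext => q; simp; cb => h1; cb => h2; rewrite ?lamK ?lami0 //; try (cb => h3 //); exfalso; simpl in *; firstorder.

Qed.
Lemma c_CK0 e f x : e <> f -> ssOp e (sOp f x) = 0.
Proof. move=> ef; apply: fsv_ext => q; simp; cb => // h1; rewrite asboolF ?lami0 //; by case. Qed.
Lemma c_CK2 v l x : l <> nil -> emits_list v l ->
  pOp v x = \sum_(e <- l) sOp e (ssOp e x).
Proof.
move=> _ [hnd hl]; apply: fsv_ext => q; rewrite /= /pg /sg /ssg /=; rewrite fv_sum.
have -> : \sum_(e <- l) fv (sOp e (ssOp e x)) q =
    \sum_(e <- l) (if `[< q 0%N = e /\ rg (q 0%N) = sc (q 1%N) >] then fv x q else 0).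
  apply: eq_bigr => e _ /=; rewrite /sg; cb => [[h1 h2]|h1].
    rewrite asboolT; last by subst e.
    rewrite fv_ssOp /ssg asboolT; last exact h2.
    by rewrite -h1 cons_shift lamiK.
  by rewrite asboolF // => [[h3 h4]]; case: h1; split => //; rewrite -h3.
rewrite sum_single //.
case: (asboolP (sc (q 0%N) = v)) => h1; case: (asboolP (In (q 0%N) l /\ rg (q 0%N) = sc (q 1%N))) => h2 //.
- case: (pselect (fv x q = 0)) => // h3; case: h2; split; first by apply/hl.
  by case: (fv_C h3) => hp _; apply: hp.
- by case: h1; case: h2 => /hl.
Qed.

Definition chen : lpa_rep E fsv :=
  @LpaRep E k _ (fun w => pOp w) (fun e => sOp e) (fun e => ssOp e) c_idem c_orth c_S_src c_S_rg
    c_Ss_rg c_Ss_src c_CK1 c_CK0 c_CK2.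

Lemma d_fin p (b : K) : exists l : list PT, forall q, (fun q => if `[< q = p /\ CC p >] then b else 0) q <> 0 -> In q l.
Proof. exists (p :: nil) => q /=; cb => // [[-> _]] _; by left. Qed.
Lemma d_C p (b : K) : forall q, (fun q => if `[< q = p /\ CC p >] then b else 0) q <> 0 -> CC q.
Proof. move=> q /=; cb => // [[-> h]] _ //. Qed.
Definition delta p b := @FSV _ (d_fin p b) (d_C p b).
Lemma fv_delta p b q : fv (delta p b) q = if `[< q = p /\ CC p >] then b else 0.
Proof. by []. Qed.
Lemma delta0 p : delta p 0 = 0.
Proof. by apply: fsv_ext => q; rewrite fv_delta; cb. Qed.
Lemma deltaD p b1 b2 : delta p (b1 + b2) = delta p b1 + delta p b2.
Proof. apply: fsv_ext => q; rewrite fvD !fv_delta; cb => //; by rewrite addr0. Qed.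
Lemma deltaZ p c b : delta p (c *: b) = c *: delta p b.
Proof. apply: fsv_ext => q; rewrite fvZ !fv_delta; cb => //; by rewrite scaler0. Qed.

Lemma shift_inj p q : shift p = shift q -> p 0%N = q 0%N -> p = q.
Proof. move=> h h0; rewrite -(cons_shift p) -(cons_shift q) h h0 //. Qed.

Lemma ss_delta p b : CC p -> ssOp (p 0%N) (delta p b) = delta (shift p) (lami p b).
Proof.
move=> hp; apply: fsv_ext => q; rewrite fv_ssOp /ssg !fv_delta.
case: (pselect (q = shift p)) => [->|hq].
  rewrite asboolT; last by case: hp => h _; apply: h.
  rewrite cons_shift (asboolT (P := p = p /\ CC p)); last by split.
  rewrite asboolT //; split => //; exact: CC_shift.
rewrite (asboolF (P := q = shift p /\ _)); last by case.
cb => // _; rewrite asboolF ?lami0 // => [[h _]]; apply: hq; rewrite -h //.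
Qed.

Lemma s_delta e p b : CC (pcons e p) -> sOp e (delta p b) = delta (pcons e p) (lam (pcons e p) b).
Proof.
move=> hp; apply: fsv_ext => q; rewrite fv_sOp /sg !fv_delta.
case: (pselect (q = pcons e p)) => [->|hq].
  rewrite asboolT; last by split => //; case: hp => h _; apply: (h 0%N).
  rewrite (asboolT (P := shift (pcons e p) = p /\ CC p)); last by split => //; exact: (CC_shift _ hp).
  by rewrite asboolT.
rewrite (asboolF (P := q = pcons e p /\ _)); last by case.
cb => // [[h1 h2]]; rewrite asboolF ?lam0 // => [[h _]]; apply: hq.
by rewrite -h -h1 cons_shift.
Qed.

Definition shiftn j (q : PT) : PT := fun i => q (i + j)%N.
Lemma shiftn0 q : shiftn 0 q = q.
Proof. by apply: funext => i; rewrite /shiftn addn0. Qed.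
Lemma shift_shiftn j q : shift (shiftn j q) = shiftn j.+1 q.
Proof. by apply: funext => i; rewrite /shift /shiftn addSn addnS. Qed.
Lemma cons_shiftn j q : pcons (q j) (shiftn j.+1 q) = shiftn j q.
Proof. apply: funext; case => [|i] //=; by rewrite /shiftn addSn addnS. Qed.
Lemma CC_shiftn j q : CC q -> CC (shiftn j q).
Proof. elim: j => [|j IH] hq; first by rewrite shiftn0. rewrite -shift_shiftn; exact: CC_shift (IH hq). Qed.

Hypothesis cpath : isPath cinf.
Lemma CC_cinf : CC cinf.
Proof. split => //; by exists 0%N, 0%N. Qed.

Section Transfer.
Variable Q : PT -> Prop.
Hypothesis Q1 : forall p, CC p -> Q p -> Q (shift p).
Hypothesis Q2 : forall e p, CC (pcons e p) -> Q p -> Q (pcons e p).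
Lemma Q_fwd p j : CC p -> Q p -> Q (shiftn j p).
Proof.
move=> hp; elim: j => [|j IH]; first by rewrite shiftn0.
move=> hq; rewrite -shift_shiftn; apply: Q1; [exact: CC_shiftn | exact: IH].
Qed.
Lemma Q_bwd p j : CC p -> Q (shiftn j p) -> Q p.
Proof.
move=> hp; elim: j => [|j IH]; first by rewrite shiftn0.
move=> hq; apply: IH; rewrite -cons_shiftn; apply: Q2 => //.
rewrite cons_shiftn; exact: CC_shiftn.
Qed.
Lemma Q_all p p' : CC p -> CC p' -> Q p -> Q p'.
Proof.
move=> hp hp' hq.
have hc : Q cinf.
  case: (hp) => _ [a [b hab]].
  have e : shiftn a p = shiftn b cinf by apply: funext => i; exact: hab.
  apply: (Q_bwd cinf b); first exact: CC_cinf.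
  rewrite -e; exact: Q_fwd.
case: (hp') => _ [a [b hab]].
have e : shiftn a p' = shiftn b cinf by apply: funext => i; exact: hab.
apply: (Q_bwd p' a) => //; rewrite e; apply: Q_fwd => //; exact: CC_cinf.
Qed.
End Transfer.

Section Irr.
Variable W : fsv -> Prop.
Hypothesis Wsub : subspace W.
Hypothesis Winv : invariant chen W.
Lemma W_ss e x : W x -> W (ssOp e x).
Proof. move=> h; exact: (Winv (Tst k e) x h). Qed.
Lemma W_s e x : W x -> W (sOp e x).
Proof. move=> h; exact: (Winv (Ts k e) x h). Qed.

Lemma peel N : forall x q0, W x -> fv x q0 <> 0 ->
  (forall q, fv x q <> 0 -> q <> q0 -> exists i, (i < N)%N /\ q i <> q0 i) ->
  exists p b, b <> 0 /\ CC p /\ W (delta p b).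
Proof.
elim: N => [|N IH] x q0 hW hx hq.
  exists q0, (fv x q0); split => //; split; first exact: fv_C hx.
  suff -> : delta q0 (fv x q0) = x by [].
  apply: fsv_ext => q; rewrite fv_delta; cb => [[-> _]|h] //.
  case: (pselect (fv x q = 0)) => // h1; case: (pselect (q = q0)) => [e|h2].
    by case: h; split => //; subst; exact: fv_C hx.
  by case: (hq _ h1 h2) => i [].
have hC := fv_C hx.
apply: (IH (ssOp (q0 0%N) x) (shift q0)); first exact: W_ss.
  rewrite fv_ssOp /ssg asboolT; last by case: hC => h _; apply: h.
  by rewrite cons_shift => h; apply: hx; rewrite -(lamiK q0 (fv x q0)) h lam0.
move=> q; rewrite fv_ssOp /ssg; cb => // h1 h2 h3.
have h4 : fv x (pcons (q0 0%N) q) <> 0 by move=> h; apply: h2; rewrite h lami0.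
have h5 : pcons (q0 0%N) q <> q0 by move=> h; apply: h3; rewrite -h.
case: (hq _ h4 h5) => [[|i] [hi hne]] //; by exists i.
Qed.
End Irr.

Variable d : nat.
Hypotheses (hd : (0 < d)%N) (hper : forall i, cinf (i + d)%N = cinf i)
  (hmin : forall j, (0 < j)%N -> (j < d)%N -> shiftn j cinf <> cinf).

Fixpoint Rt (m : nat) : lterm E k :=
  match m with 0 => Ts k (cinf 0%N) | m'.+1 => Tmul (Rt m') (Ts k (cinf m'.+1)) end.

Lemma Rt0 y : rep_eval chen (Rt 0) y = sOp (cinf 0%N) y. Proof. by []. Qed.
Lemma RtS m y : rep_eval chen (Rt m.+1) y = rep_eval chen (Rt m) (sOp (cinf m.+1) y). Proof. by []. Qed.

Lemma sOp_supp e y q : fv (sOp e y) q <> 0 -> q 0%N = e /\ fv y (shift q) <> 0.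
Proof. rewrite fv_sOp /sg; cb => // [[h1 h2]] h; split => // h3; apply: h; by rewrite h3 lam0. Qed.

Lemma shift1 q : shift q = shiftn 1 q.
Proof. by apply: funext => i; rewrite /shiftn addn1. Qed.

Lemma R_supp m : forall y q, fv (rep_eval chen (Rt m) y) q <> 0 ->
  (forall i, (i <= m)%N -> q i = cinf i) /\ fv y (shiftn m.+1 q) <> 0.
Proof.
elim: m => [|m IH] y q /=.
  move/sOp_supp => [h1 h2]; split; last by rewrite -shift1.
  by case => // i; rewrite ltn0.
move/IH => [h1 /sOp_supp [h2 h3]]; split; last by rewrite -shift_shiftn.
move=> i; rewrite leq_eqVlt; case/orP => [/eqP ->|hi]; last exact: h1.
by rewrite -h2 /shiftn add0n.
Qed.

Lemma R_val m y : (m < d)%N -> fv (rep_eval chen (Rt m) y) cinf = M (fv y (shiftn m.+1 cinf)).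
Proof.
elim: m y => [|m IH] y hm.
  rewrite Rt0 fv_sOp /sg asboolT; last by split => //; apply: cpath.
  by rewrite /lam asboolT // shift1.
rewrite RtS IH; last exact: ltnW.
rewrite fv_sOp /sg asboolT; last first.
  split; first by []. exact: (cpath m.+1).
rewrite /lam asboolF; last exact: hmin.
by rewrite shift_shiftn.
Qed.

Definition St := Rt d.-1.

Lemma eq_cinf q : (forall i, (i < d)%N -> q i = cinf i) -> shiftn d q = cinf -> q = cinf.
Proof.
move=> h1 h2; apply: funext => i; case: (ltnP i d) => hi; first exact: h1.
rewrite -(subnK hi); have := f_equal (fun f => f (i - d)%N) h2; rewrite /shiftn => ->.
by rewrite hper.
Qed.

Lemma shiftn_d : shiftn d cinf = cinf.
Proof. by apply: funext => i; rewrite /shiftn hper. Qed.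

Lemma S_delta b : rep_eval chen St (delta cinf b) = delta cinf (M b).
Proof.
apply: fsv_ext => q; rewrite fv_delta.
case: (pselect (q = cinf)) => [->|hq].
  rewrite /St R_val; last by rewrite prednK.
  rewrite prednK // shiftn_d fv_delta !asboolT //; split => //; exact: CC_cinf.
rewrite asboolF; last by case.
case: (pselect (fv (rep_eval chen St (delta cinf b)) q = 0)) => // h.
case: (R_supp _ _ _ h) => h1; rewrite prednK // fv_delta; cb => // [[h2 _]] _.
case: hq; apply: eq_cinf => // i hi; apply: h1; by rewrite -ltnS prednK.
Qed.

Lemma S_fix_zero (H1 : forall y, M y = y -> y = 0) y : rep_eval chen St y = y -> y = 0.
Proof.
move=> hy.
have hc : fv y cinf = 0.
  apply: H1; rewrite -{2}hy /St R_val; last by rewrite prednK.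
  by rewrite prednK // shiftn_d.
have claim : forall m q, fv y q <> 0 -> forall i, (i < d * m)%N -> q i = cinf i.
  elim => [|m IH] q hq i hi; first by rewrite muln0 in hi.
  rewrite -hy in hq; case: (R_supp _ _ _ hq); rewrite prednK // => h1 h2.
  case: (ltnP i d) => hid; first by apply: h1; rewrite -ltnS prednK.
  have e : cinf i = cinf (i - d)%N by rewrite -{1}(subnK hid) hper.
  have := IH _ h2 (i - d)%N; rewrite /shiftn subnK // -e; apply.
  move: hi; rewrite mulnS; lia.
apply: fsv_ext => q; rewrite fv0.
case: (pselect (fv y q = 0)) => // h.
have e : q = cinf.
  apply: funext => i; apply: (claim i.+1 q h); by rewrite leq_pmull.
by rewrite e hc.
Qed.

Section Irr2.
Hypothesis H2 : forall U : K -> Prop, subspace U -> (forall b, U b -> U (M b)) ->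
  forall b', U b' -> b' <> 0 -> forall b, U b.
Hypothesis Knz : exists b0 : K, b0 <> 0.

Lemma fin_sep (l : list PT) q0 : exists N, forall q, In q l -> q <> q0 ->
  exists i, (i < N)%N /\ q i <> q0 i.
Proof.
elim: l => [|q l [N IH]]; first by exists 0%N.
case: (pselect (q = q0)) => [e|hne].
  by exists N => q' [<-|/IH] //.
have [i0 hi0] : exists i, q i <> q0 i.
  apply: contrapT => hn; apply: hne; apply: funext => i.
  by apply: contrapT => h; apply: hn; exists i.
exists (maxn N i0.+1) => q' [<- _|h1 h2].
  by exists i0; split => //; rewrite leq_max leqnn orbT.
case: (IH _ h1 h2) => i [hi hne']; exists i; split => //.
by rewrite leq_max hi.
Qed.

Theorem chen_irr : irreducible chen.
Proof.
split.
  case: Knz => b0 hb0; exists (Tp k (sc (cinf 0%N))), (delta cinf b0) => h.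
  have := f_equal (fun z => fv z cinf) h; rewrite /= /pg fv_delta asboolT // asboolT //.
  split => //; exact: CC_cinf.
move=> W Wsub Winv.
case: (pselect (exists x, W x /\ x <> 0)) => [[x [hx hx0]]|hn]; last first.
  left => x hx; apply: contrapT => h; apply: hn; by exists x.
right.
have [q0 hq0] : exists q0, fv x q0 <> 0.
  apply: contrapT => hn; apply: hx0; apply: fsv_ext => q; rewrite fv0.
  by apply: contrapT => h; apply: hn; exists q.
case: (fv_fin x) => l hl; case: (fin_sep l q0) => N hN.
case: (peel W Winv N x q0 hx hq0) => [q h1 h2|p [b [hb [hp hW]]]].
  exact: hN (hl _ h1) h2.
case: Wsub => [W0 [WD WZ]].
have QB : exists b, b <> 0 /\ W (delta cinf b).
  pose Q := fun p => exists b, b <> 0 /\ W (delta p b).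
  apply: (@Q_all Q _ _ p cinf hp CC_cinf); last by exists b.
    move=> p' hp' [b' [hb' hW']]; exists (lami p' b'); split.
      by move=> h; apply: hb'; rewrite -(lamiK p' b') h lam0.
    rewrite -ss_delta //; exact: W_ss.
  move=> e p' hp' [b' [hb' hW']]; exists (lam (pcons e p') b'); split.
    by move=> h; apply: hb'; rewrite -(lamK (pcons e p') b') h lami0.
  rewrite -s_delta //; exact: W_s.
have QC : forall b, W (delta cinf b).
  case: QB => b' [hb' hW']; apply: (H2 (fun b => W (delta cinf b)) _ _ b' hW' hb').
    split; first by rewrite delta0.
    split; first by move=> y z hy hz; rewrite deltaD; apply: WD.
    by move=> c y hy; rewrite deltaZ; apply: WZ.
  move=> b1 hb1; rewrite -S_delta; exact: (Winv St _ hb1).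
have QD : forall p, CC p -> forall b, W (delta p b).
  move=> p' hp'.
  pose Q := fun p => forall b, W (delta p b).
  apply: (@Q_all Q _ _ cinf p' CC_cinf hp' QC).
    move=> p1 hp1 hq b1; rewrite -(lamK p1 b1) -ss_delta //; exact: W_ss.
  move=> e p1 hp1 hq b1; rewrite -(lamiK (pcons e p1) b1) -s_delta //; exact: W_s.
suff : forall l z, (forall q, fv z q <> 0 -> In q l) -> W z.
  move=> H z; case: (fv_fin z) => l' hl'; exact: H hl'.
elim => [|q l' IH] z hz.
  suff -> : z = 0 by [].
  apply: fsv_ext => q; rewrite fv0; apply: contrapT => h; exact: hz q h.
rewrite -(subrK (delta q (fv z q)) z); apply: WD; last first.
  case: (pselect (fv z q = 0)) => [->|h]; first by rewrite delta0.
  by apply: QD; exact: fv_C h.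
apply: IH => q' ; rewrite fvB fv_delta.
case: (pselect (q' = q)) => [->|hne].
  cb => [_|h]; first by rewrite subrr.
  case: (pselect (fv z q = 0)) => [->|h']; first by rewrite subr0.
  by case: h; split => //; exact: fv_C h'.
rewrite asboolF; last by case.
by rewrite subr0 => /hz [e|] //; case: hne.
Qed.
End Irr2.

End Chen.

Section Main.
Variables (E : graph) (k : fieldType) (cinf : nat -> edge E).
Hypothesis cpath : isPath E cinf.
Variable d : nat.
Hypotheses (hd : (0 < d)%N) (hper : forall i, cinf (i + d)%N = cinf i)
  (hmin : forall j, (0 < j)%N -> (j < d)%N -> shiftn E j cinf <> cinf).
Hypothesis H : forall (V1 V2 : lmodType k) (rho1 : lpa_rep E V1) (rho2 : lpa_rep E V2),
      irreducible rho1 -> irreducible rho2 -> alg_equiv rho1 rho2.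

Lemma no_equiv (K : lmodType k) (M Minv : {linear K -> K}) (MK : cancel M Minv) (MiK : cancel Minv M)
  (H1 : forall y, M y = y -> y = 0)
  (H2 : forall U : K -> Prop, subspace U -> (forall b, U b -> U (M b)) ->
    forall b', U b' -> b' <> 0 -> forall b, U b)
  (Knz : exists b0 : K, b0 <> 0) : False.
Proof.
pose idk : {linear k^o -> k^o} := idfun.
have idK : cancel idk idk by [].
have irr1 := chen_irr E k cinf K M Minv MK MiK cpath d hd hper hmin H2 Knz.
have H2' : forall U : k^o -> Prop, subspace U -> (forall b, U b -> U (idk b)) ->
    forall b', U b' -> b' <> 0 -> forall b, U b.
  move=> U [_ [_ UZ]] _ b' hb' hb0 b.
  have -> : b = (b / b') *: b' by rewrite /GRing.scale /= mulfVK //; apply/eqP.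
  exact: UZ.
have Knz' : exists b0 : k^o, b0 <> 0 by exists 1; apply/eqP; exact: oner_neq0.
have irr2 := chen_irr E k cinf k^o idk idk idK idK cpath d hd hper hmin H2' Knz'.
case: (H _ _ _ _ irr1 irr2) => T [Ti [hT [hTi heq]]].
set del := delta E k cinf k^o cinf 1.
have hfix : rep_eval (chen E k cinf k^o idk idk idK idK) (St E k cinf d) del = del.
  by rewrite /del (S_delta E k cinf k^o idk idk idK idK cpath d hd hper hmin).
have hy : rep_eval (chen E k cinf K M Minv MK MiK) (St E k cinf d) (Ti del) = Ti del.
  by rewrite heq hTi hfix.
have h0 := S_fix_zero E k cinf K M Minv MK MiK cpath d hd hper hmin H1 _ hy.
have := f_equal T h0; rewrite hTi linear0 => hdel.
have := f_equal (fun z => fv E k cinf k^o z cinf) hdel; rewrite /= ?fv_delta asboolT.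
  by move/eqP; rewrite oner_eq0.
split => //; exact: CC_cinf.
Qed.
End Main.

Section F2.
Variable k : fieldType.
Hypothesis h2 : forall a : k, a = 0 \/ a = 1.
Definition o1 : 'I_2 := ord_max.
Definition mk2 (a b : k) : 'rV[k]_2 := \row_(j < 2) (if j == ord0 then a else b).
Lemma mk2_eta (v : 'rV[k]_2) : v = mk2 (v ord0 ord0) (v ord0 o1).
Proof.
apply/rowP => j; rewrite mxE; case: j => [[|[|j]]] //= hj.
- by congr (v _ _); apply: val_inj.
- by rewrite ord1; congr (v _ _); apply: val_inj.
Qed.
Lemma mk2_inj a b c d : mk2 a b = mk2 c d -> a = c /\ b = d.
Proof.
move=> h; have h1 := f_equal (fun v : 'rV[k]_2 => v ord0 ord0) h.
have h3 := f_equal (fun v : 'rV[k]_2 => v ord0 o1) h.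
by move: h1 h3; rewrite /= !mxE.
Qed.
Lemma mk2_0 : mk2 0 0 = 0.
Proof. by apply/rowP => j; rewrite !mxE; case: ifP. Qed.
Lemma mk2_lin x y : mk2 x y = x *: mk2 1 0 + y *: mk2 0 1.
Proof. apply/rowP => j; rewrite !mxE; case: ifP => _; by rewrite ?mulr1 ?mulr0 ?addr0 ?add0r. Qed.
Definition A2 : 'M[k]_2 := \matrix_(i < 2, j < 2) (if (i == ord0) && (j == ord0) then 0 else 1).
Definition B2 : 'M[k]_2 := \matrix_(i < 2, j < 2) (if (i == o1) && (j == o1) then 0 else 1).
Lemma mk2A a b : mk2 a b *m A2 = mk2 b (a + b).
Proof.
apply/rowP => j; rewrite !mxE !big_ord_recl big_ord0 !mxE; case: j => [[|[|j]]] //= hj;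
  by rewrite ?mulr0 ?mulr1 ?add0r ?addr0.
Qed.
Lemma mk2B a b : mk2 a b *m B2 = mk2 (a + b) a.
Proof.
apply/rowP => j; rewrite !mxE !big_ord_recl big_ord0 !mxE; case: j => [[|[|j]]] //= hj;
  by rewrite ?mulr0 ?mulr1 ?add0r ?addr0.
Qed.
Lemma two : 1 + 1 = 0 :> k.
Proof. case: (h2 (1 + 1)) => // h; have := f_equal (fun x => x - 1) h; rewrite /= addrK subrr => /eqP; by rewrite oner_eq0. Qed.
Lemma dbl (x : k) : x + x = 0.
Proof. by rewrite -{1 2}(mul1r x) -mulrDl two mul0r. Qed.
End F2.
Arguments mk2 {k}. Arguments mk2_eta {k}. Arguments mk2_inj {k}. Arguments mk2_0 {k}.
Arguments mk2_lin {k}. Arguments mk2A {k}. Arguments mk2B {k}. Arguments two {k}. Arguments dbl {k}.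

Section Scal.
Variables (k : fieldType) (a : k).
Definition mulk (x : k^o) : k^o := a * x.
Lemma mulk_lin : linear mulk.
Proof. by move=> c x y; rewrite /mulk /GRing.scale /= mulrDr mulrCA. Qed.
HB.instance Definition _ := GRing.isLinear.Build k k^o k^o *:%R mulk mulk_lin.
End Scal.

Theorem lemma4p5 (E : graph) (k : fieldType) :
  (forall (V1 V2 : lmodType k) (rho1 : lpa_rep E V1) (rho2 : lpa_rep E V2),
      irreducible rho1 -> irreducible rho2 -> alg_equiv rho1 rho2) ->
  ~ has_cycle E.
Proof.
move=> H [n [f [hn [hf hc]]]].
pose cinf := fun i => f (i %% n)%N.
have cpath : isPath E cinf.
  move=> i; rewrite /cinf.
  have hi : (i %% n < n)%N by rewrite ltn_mod.
  have e : (i.+1 %% n = (i %% n).+1 %% n)%N by rewrite {1}(divn_eq i n) -addnS modnMDl.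
  rewrite e; case: (ltnP (i %% n).+1 n) => h.
    rewrite (modn_small h); exact: hf.
  have e3 : (i %% n = n.-1)%N by lia.
  have e2 : ((i %% n).+1 = n)%N by lia.
  by rewrite e2 modnn hc e3.
have hex : exists m, (fun m => `[< (0 < m)%N /\ forall i, cinf (i + m)%N = cinf i >]) m.
  exists n; apply/asboolP; split => // i; by rewrite /cinf modnDr.
case: (ex_minnP hex) => d /asboolP [hd hper] hmin'.
have hmin : forall j, (0 < j)%N -> (j < d)%N -> shiftn E j cinf <> cinf.
  move=> j hj hjd he; have : (d <= j)%N; last by rewrite leqNgt hjd.
  apply: hmin'; apply/asboolP; split => // i; by have := f_equal (fun g => g i) he.
case: (pselect (exists a : k, a <> 0 /\ a <> 1)) => [[a [ha0 ha1]] | hk].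
  have MK : cancel (mulk k a : {linear k^o -> k^o}) (mulk k a^-1 : {linear k^o -> k^o}).
    by move=> x; rewrite /= /mulk mulKf //; apply/eqP.
  have MiK : cancel (mulk k a^-1 : {linear k^o -> k^o}) (mulk k a : {linear k^o -> k^o}).
    by move=> x; rewrite /= /mulk mulVKf //; apply/eqP.
  apply: (no_equiv E k cinf cpath d hd hper hmin H _ _ _ MK MiK).
  - move=> y; rewrite /= /mulk => /eqP; rewrite -subr_eq0 -{2}(mul1r y) -mulrBl mulf_eq0.
    case/orP => /eqP // h; case: ha1; apply/eqP; rewrite -subr_eq0; exact/eqP.
  - move=> U [_ [_ UZ]] _ b' hb' hb0 b.
    have -> : b = (b / b') *: b' by rewrite /GRing.scale /= mulfVK //; apply/eqP.
    exact: UZ.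
  - by exists 1; apply/eqP; exact: oner_neq0.
have h2 : forall a : k, a = 0 \/ a = 1.
  move=> a; case: (pselect (a = 0)) => [|h0]; first by left.
  case: (pselect (a = 1)) => [|h1]; first by right.
  by case: hk; exists a.
have MK : cancel (mulmxr (A2 k) : {linear 'rV[k]_2 -> 'rV[k]_2}) (mulmxr (B2 k)).
  move=> v; rewrite /= (mk2_eta v) mk2A mk2B; congr mk2.
  by rewrite addrCA (dbl h2) ?addr0.
have MiK : cancel (mulmxr (B2 k) : {linear 'rV[k]_2 -> 'rV[k]_2}) (mulmxr (A2 k)).
  move=> v; rewrite /= (mk2_eta v) mk2B mk2A; congr mk2.
  by rewrite addrAC (dbl h2) ?add0r.
apply: (no_equiv E k cinf cpath d hd hper hmin H _ _ _ MK MiK).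
- move=> v; rewrite /= (mk2_eta v) mk2A => /mk2_inj [e1 e2].
  have ha : v ord0 ord0 = 0.
    by apply: (addIr (v ord0 o1)); rewrite add0r.
  by rewrite e1 ha mk2_0.
- move=> U [U0 [UD UZ]] UM b' hb' hb0 b.
  have UM' : forall x y, U (mk2 x y) -> U (mk2 y (x + y)).
    by move=> x y hxy; rewrite -mk2A; exact: (UM _ hxy).
  have [He0 He1] : U (mk2 1 0) /\ U (mk2 0 1).
    move: hb' hb0; rewrite (mk2_eta b').
    case: (h2 (b' ord0 ord0)) => ->; case: (h2 (b' ord0 o1)) => -> hb' hb0.
    + by case: hb0; rewrite mk2_0.
    + split; last exact: hb'.
      by have := UM' _ _ (UM' _ _ hb'); rewrite add0r (two h2).
    + split => //; by have := UM' _ _ hb'; rewrite addr0.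
    + have h3 := UM' _ _ hb'; rewrite (two h2) in h3; split => //.
      by have := UM' _ _ h3; rewrite addr0.
  rewrite (mk2_eta b) mk2_lin; apply: UD; exact: UZ.
- exists (mk2 1 0) => /(f_equal (fun v : 'rV[k]_2 => v ord0 ord0)).
  rewrite !mxE /= => /eqP; by rewrite oner_eq0.
Qed.
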